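(* Let $T(p)=\exp(-(-\ln p)^\alpha)$ for $p\in[0,1]$ with parameter $\alpha>0$, $\alpha\ne1$, and let $\tilde T(p):=1-T(1-p)=1-\exp(-(-\ln(1-p))^\alpha)$. (1) If $\alpha>1$ (so $T$ is S-shaped), then $p^*(\alpha):=\inf\{p\in[0,1):\tilde T'(p)\ge\frac{1-\tilde T(p)}{1-p}\}$ equals $p^*(\alpha)=1-\exp\big(-\alpha^{-\frac{1}{\alpha-1}}\big)$. (2) If $\alpha<1$ (so $T$ is inverse S-shaped), then $p^*(\alpha):=\sup\{p\in[0,1):\tilde T'(p)\le\tilde T(p)/p\}$ equals $p^*(\alpha)=1-\exp(-x)$, where $x$ is the unique solution of $$x=\Big(\ln\big(\alpha x^{\alpha-1}e^x(1-e^{-x})+1\big)\Big)^{1/\alpha}.$$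
   Context: $T$ is the Prelec probability weighting function with parameter $\alpha$. *)

(* Defs.v *)
From Stdlib Require Export Reals.
From Coquelicot Require Export Coquelicot.
Open Scope R_scope.

Definition prelecT (alpha p : R) : R := exp (- Rpower (- ln p) alpha).

Definition prelecTt (alpha p : R) : R := 1 - prelecT alpha (1 - p).

Definition fp_eq (alpha x : R) : Prop :=
  x = Rpower (ln (alpha * Rpower x (alpha - 1) * exp x * (1 - exp (- x)) + 1)) (/ alpha).

(* Main.v *)
Require Import Defs.
From Stdlib Require Import Reals Lra Psatz.
From Coquelicot Require Import Coquelicot.
Open Scope R_scope.

Lemma cont_of_der f df x : is_derive f x df -> continuity_pt f x.
Proof.
  intros H. apply continuity_pt_filterlim. exact (ex_derive_continuous f x (ex_intro _ df H)).
Qed.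

Lemma mvt_lb f df a b m : a <= b ->
  (forall x, a <= x <= b -> is_derive f x (df x)) ->
  (forall x, a <= x <= b -> m <= df x) -> m * (b - a) <= f b - f a.
Proof.
  intros Hab Hd Hm.
  destruct (MVT_gen f a b df) as [c [Hc Hfc]].
  - intros x Hx. rewrite Rmin_left in Hx by lra. rewrite Rmax_right in Hx by lra.
    apply Hd; lra.
  - intros x Hx. rewrite Rmin_left in Hx by lra. rewrite Rmax_right in Hx by lra.
    apply (cont_of_der f (df x)). apply Hd; lra.
  - rewrite Rmin_left in Hc by lra. rewrite Rmax_right in Hc by lra.
    rewrite Hfc. specialize (Hm c Hc). nra.
Qed.

Lemma mvt_ub f df a b m : a <= b ->
  (forall x, a <= x <= b -> is_derive f x (df x)) ->
  (forall x, a <= x <= b -> df x <= m) -> f b - f a <= m * (b - a).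
Proof.
  intros Hab Hd Hm.
  destruct (MVT_gen f a b df) as [c [Hc Hfc]].
  - intros x Hx. rewrite Rmin_left in Hx by lra. rewrite Rmax_right in Hx by lra.
    apply Hd; lra.
  - intros x Hx. rewrite Rmin_left in Hx by lra. rewrite Rmax_right in Hx by lra.
    apply (cont_of_der f (df x)). apply Hd; lra.
  - rewrite Rmin_left in Hc by lra. rewrite Rmax_right in Hc by lra.
    rewrite Hfc. specialize (Hm c Hc). nra.
Qed.

Lemma ln_le_iff x y : 0 < x -> 0 < y -> (x <= y <-> ln x <= ln y).
Proof.
  intros Hx Hy; split; intros H.
  - apply ln_le; auto.
  - destruct (Rle_lt_dec x y) as [h|h]; auto.
    pose proof (ln_increasing y x Hy h). lra.
Qed.

Lemma exp_le_iff x y : x <= y <-> exp x <= exp y.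
Proof.
  split; intros H.
  - destruct (Rle_lt_or_eq_dec _ _ H) as [h|h]; [left; apply exp_increasing; auto| subst; lra].
  - destruct (Rle_lt_dec x y) as [h|h]; auto.
    pose proof (exp_increasing y x h). lra.
Qed.

Definition phi (s : R) := (exp s - 1) / s.
Definition psi (s : R) := ln (phi s).
Definition dpsi (s : R) := exp s / (exp s - 1) - / s.
Definition ddpsi (s : R) := - exp s / ((exp s - 1) * (exp s - 1)) + / (s * s).

Lemma exp_gt s : 0 < s -> s < exp s - 1.
Proof. intros H. pose proof (exp_ineq1 s). lra. Qed.

Lemma phi_pos s : 0 < s -> 0 < phi s.
Proof. intros H. unfold phi. pose proof (exp_gt s H). apply Rdiv_lt_0_compat; lra. Qed.

Lemma psi_der s : 0 < s -> is_derive psi s (dpsi s).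
Proof.
  intros H. pose proof (exp_gt s H). unfold psi, phi, dpsi. auto_derive.
  - split; [lra|split; auto]. apply Rdiv_lt_0_compat; lra.
  - field. lra.
Qed.

Lemma dpsi_pos s : 0 < s -> 0 < dpsi s.
Proof.
  intros H. pose proof (exp_gt s H). pose proof (exp_ineq1 (-s)).
  assert (HB : exp s * exp (-s) = 1) by (rewrite <- exp_plus; replace (s + - s) with 0 by ring; apply exp_0).
  pose proof (exp_pos s). pose proof (exp_pos (-s)).
  assert (s * exp s > exp s - 1).
  { assert (-s <> 0) by lra. specialize (H1 H4). nra. }
  replace (dpsi s) with ((s * exp s - (exp s - 1)) / ((exp s - 1) * s)).
  - apply Rdiv_lt_0_compat; nra.
  - unfold dpsi. field. lra.
Qed.

Lemma dpsi_der s : 0 < s -> is_derive dpsi s (ddpsi s).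
Proof.
  intros H. pose proof (exp_gt s H). unfold dpsi, ddpsi. auto_derive.
  - split; [lra|split; auto; lra].
  - field. lra.
Qed.

Lemma k_nonneg t : 0 <= t -> 2 * t <= exp t - exp (- t).
Proof.
  intros Ht.
  pose proof (mvt_lb (fun t => exp t - exp (-t) - 2 * t) (fun t => exp t + exp (-t) - 2) 0 t 0 Ht) as M.
  assert (M' : 0 * (t - 0) <= exp t - exp (- t) - 2 * t - (exp 0 - exp (- 0) - 2 * 0)).
  { apply M.
    - intros x _. auto_derive; [exact I| ring].
    - intros x _. assert (exp x * exp (-x) = 1) by (rewrite <- exp_plus; replace (x + - x) with 0 by ring; apply exp_0).
      pose proof (exp_pos x). pose proof (exp_pos (-x)). cbv beta. pose proof (Rmult_le_pos _ _ (Rlt_le _ _ H1) (Rle_0_sqr (exp x - 1))). unfold Rsqr in *. nra. }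
  rewrite Ropp_0, exp_0 in M'. lra.
Qed.

Lemma ddpsi_nonneg s : 0 < s -> 0 <= ddpsi s.
Proof.
  intros H. pose proof (exp_gt s H).
  pose proof (k_nonneg (s/2) ltac:(lra)) as K.
  set (h := exp (s/2)) in *. set (g := exp (-(s/2))) in *.
  assert (Hhg : h * g = 1) by (unfold h, g; rewrite <- exp_plus; replace (s/2 + - (s/2)) with 0 by ring; apply exp_0).
  assert (HA : exp s = h * h) by (unfold h; rewrite <- exp_plus; f_equal; field).
  assert (Hh : 0 < h) by apply exp_pos.
  assert (Hg : 0 < g) by apply exp_pos.
  assert (Hk : h * h - 1 >= s * h) by nra.
  assert (Hn : 0 <= (exp s - 1) * (exp s - 1) - s * s * exp s).
  { rewrite HA. replace ((h * h - 1) * (h * h - 1) - s * s * (h * h)) with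
      ((h * h - 1 - s * h) * (h * h - 1 + s * h)) by ring.
    apply Rmult_le_pos; nra. }
  replace (ddpsi s) with (((exp s - 1) * (exp s - 1) - s * s * exp s) / ((s * s) * ((exp s - 1) * (exp s - 1)))).
  - apply Rdiv_le_0_compat; [lra|]. apply Rmult_lt_0_compat; nra.
  - unfold ddpsi. field. lra.
Qed.

Lemma dpsi_mono a b : 0 < a -> a <= b -> dpsi a <= dpsi b.
Proof.
  intros Ha Hab. pose proof (mvt_lb dpsi ddpsi a b 0 Hab) as M.
  assert (0 * (b - a) <= dpsi b - dpsi a); [|lra].
  apply M; intros x Hx; [apply dpsi_der | apply ddpsi_nonneg]; lra.
Qed.

Lemma psi_mono a b : 0 < a -> a <= b -> psi a <= psi b.
Proof.
  intros Ha Hab. pose proof (mvt_lb psi dpsi a b 0 Hab) as M.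
  assert (0 * (b - a) <= psi b - psi a); [|lra].
  apply M; intros x Hx; [apply psi_der | left; apply dpsi_pos]; lra.
Qed.

Definition uu (p : R) := - ln (1 - p).
Definition EE (a u : R) := exp (a * ln u).

Lemma uu_pos p : 0 < p < 1 -> 0 < uu p.
Proof.
  intros H. unfold uu. pose proof (ln_increasing (1 - p) 1 ltac:(lra) ltac:(lra)).
  rewrite ln_1 in H0. lra.
Qed.

Lemma exp_uu p : 0 < p < 1 -> exp (- uu p) = 1 - p.
Proof. intros H. unfold uu. rewrite Ropp_involutive, exp_ln; lra. Qed.

Lemma Dprelec a p : 0 < p < 1 ->
  Derive (prelecTt a) p = exp (- EE a (uu p)) * EE a (uu p) * a / (uu p * (1 - p)).
Proof.
  intros H. pose proof (uu_pos p H). apply is_derive_unique.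
  unfold prelecTt, prelecT, Rpower, EE, uu in *. auto_derive.
  - unfold Rminus in *; repeat split; lra.
  - unfold Rminus in *; field; split; lra.
Qed.

Lemma one_minus_Tt a p : 1 - prelecTt a p = exp (- EE a (uu p)).
Proof. unfold prelecTt, prelecT, Rpower, EE, uu. ring. Qed.

Lemma Tt_eq a p : prelecTt a p = 1 - exp (- EE a (uu p)).
Proof. unfold prelecTt, prelecT, Rpower, EE, uu. ring. Qed.

Lemma mul_pos_le_iff k y z : 0 < k -> (k * y <= k * z <-> y <= z).
Proof. intros Hk; split; intros; nra. Qed.

Lemma part1_cond a p : 1 < a -> 0 < p < 1 ->
  (Derive (prelecTt a) p >= (1 - prelecTt a p) / (1 - p) <->
   1 - exp (- Rpower a (- / (a - 1))) <= p).
Proof.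
  intros Ha Hp. rewrite Dprelec, one_minus_Tt by auto.
  pose proof (uu_pos p Hp) as Hu.
  set (u := uu p) in *. set (E := EE a u).
  assert (HE : 0 < E) by apply exp_pos.
  set (X := exp (- E)). assert (HX : 0 < X) by apply exp_pos.
  replace (X * E * a / (u * (1 - p))) with ((X / (1 - p)) * (E * a / u)) by (field; split; lra).
  replace (X / (1 - p)) with ((X / (1 - p)) * 1) at 2 by ring.
  assert (HK : 0 < X / (1 - p)) by (apply Rdiv_lt_0_compat; lra).
  transitivity (u <= E * a).
  { split; intros.
    - apply Rge_le in H. apply mul_pos_le_iff in H; auto.
      assert (1 * u <= E * a / u * u) by (apply Rmult_le_compat_r; lra).
      replace (E * a / u * u) with (E * a) in H0 by (field; lra). lra.
    - apply Rle_ge. apply mul_pos_le_iff; auto.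
      replace (E * a / u) with ((E * a) * / u) by (unfold Rdiv; ring).
      replace 1 with (u * / u) by (field; lra).
      apply Rmult_le_compat_r; [left; apply Rinv_0_lt_compat; lra| lra]. }
  rewrite (ln_le_iff u (E * a)) by nra.
  assert (HEa : ln (E * a) = a * ln u + ln a) by (rewrite ln_mult by lra; unfold E, EE; rewrite ln_exp; ring).
  rewrite HEa.
  set (c := Rpower a (- / (a - 1))).
  assert (Hc : c = exp (- ln a / (a - 1))) by (unfold c, Rpower; f_equal; field; lra).
  transitivity (c <= u).
  { rewrite Hc. rewrite <- (exp_ln u) at 3 by lra. rewrite <- exp_le_iff.
    split; intros.
    - assert (ln u * (a - 1) >= - ln a) by lra.
      replace (- ln a / (a - 1)) with ((- ln a) * / (a - 1)) by (unfold Rdiv; ring).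
      replace (ln u) with ((ln u * (a - 1)) * / (a - 1)) by (field; lra).
      apply Rmult_le_compat_r; [left; apply Rinv_0_lt_compat; lra| lra].
    - assert (ln u * (a - 1) >= - ln a / (a - 1) * (a - 1)) by (apply Rle_ge, Rmult_le_compat_r; lra).
      replace (- ln a / (a - 1) * (a - 1)) with (- ln a) in H0 by (field; lra). lra. }
  unfold u, uu. split; intros.
  - assert (ln (1 - p) <= - c) by lra.
    apply (proj1 (exp_le_iff _ _)) in H0. rewrite exp_ln in H0 by lra. lra.
  - assert (1 - p <= exp (- c)) by lra.
    apply ln_le in H0; [|lra]. rewrite ln_exp in H0. lra.
Qed.

Definition Dfun (a u : R) := psi (EE a u) - psi u.
Definition dD (a u : R) := dpsi (EE a u) * (a * EE a u / u) - dpsi u.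

Lemma EE_der a u : 0 < u -> is_derive (EE a) u (a * EE a u / u).
Proof. intros H. unfold EE. auto_derive; auto. field. lra. Qed.

Lemma Dfun_der a u : 0 < u -> is_derive (Dfun a) u (dD a u).
Proof.
  intros H.
  pose proof (is_derive_comp psi (EE a) u _ _ (psi_der _ (exp_pos (a * ln u))) (EE_der a u H)) as H1.
  pose proof (psi_der u H) as H2.
  pose proof (is_derive_minus _ _ _ _ _ H1 H2) as H3.
  unfold minus, plus, opp, scal in H3; simpl in H3; unfold mult in H3; simpl in H3.
  replace (dD a u) with (a * EE a u / u * dpsi (exp (a * ln u)) + - dpsi u)
    by (unfold dD, EE; ring).
  eapply is_derive_ext; [|exact H3].
  intros t. unfold Dfun. simpl. ring.
Qed.

Lemma ln_nonneg u : 1 <= u -> 0 <= ln u.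
Proof. intros H. rewrite <- ln_1. apply ln_le; lra. Qed.

Lemma ln_nonpos u : 0 < u -> u <= 1 -> ln u <= 0.
Proof. intros H H1. rewrite <- ln_1. apply ln_le; lra. Qed.

Lemma dD_bound a u : 0 < a < 1 -> 1 <= u -> dD a u <= (a - 1) * dpsi 1.
Proof.
  intros Ha Hu. unfold dD.
  pose proof (ln_nonneg u Hu) as Hl.
  set (E := EE a u).
  assert (HE1 : 1 <= E).
  { unfold E, EE. rewrite <- exp_0. apply (proj1 (exp_le_iff _ _)). nra. }
  assert (HEu : E <= u).
  { unfold E, EE. rewrite <- (exp_ln u) at 2 by lra. apply (proj1 (exp_le_iff _ _)). nra. }
  pose proof (dpsi_mono E u ltac:(lra) HEu) as M1.
  pose proof (dpsi_mono 1 u ltac:(lra) Hu) as M2.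
  pose proof (dpsi_pos E ltac:(lra)) as P1.
  assert (Hr : a * E / u <= a).
  { unfold Rdiv. replace a with (a * 1) at 2 by ring. rewrite Rmult_assoc.
    apply Rmult_le_compat_l; [lra|]. replace 1 with (u * / u) by (field; lra).
    apply Rmult_le_compat_r; [left; apply Rinv_0_lt_compat; lra | lra]. }
  assert (Hr0 : 0 <= a * E / u) by (apply Rdiv_le_0_compat; nra).
  assert (dpsi E * (a * E / u) <= dpsi u * a).
  { apply Rle_trans with (dpsi E * a). apply Rmult_le_compat_l; lra.
    apply Rmult_le_compat_r; lra. }
  nra.
Qed.

Lemma EE_1 a : EE a 1 = 1.
Proof. unfold EE. rewrite ln_1, Rmult_0_r, exp_0. reflexivity. Qed.

Lemma Dfun_1 a : Dfun a 1 = 0.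
Proof. unfold Dfun. rewrite EE_1. ring. Qed.

Lemma Dfun_small a u : 0 < a < 1 -> 0 < u <= 1 -> 0 <= Dfun a u.
Proof.
  intros Ha Hu. unfold Dfun.
  assert (u <= EE a u).
  { unfold EE. rewrite <- (exp_ln u) at 1 by lra. apply (proj1 (exp_le_iff _ _)).
    pose proof (ln_nonpos u ltac:(lra) ltac:(lra)). nra. }
  pose proof (psi_mono u (EE a u) ltac:(lra) H). lra.
Qed.

Lemma Dfun_decr a u v : 0 < a < 1 -> 1 <= u <= v ->
  Dfun a v - Dfun a u <= (a - 1) * dpsi 1 * (v - u).
Proof.
  intros Ha Huv. apply (mvt_ub (Dfun a) (dD a)); [lra| |].
  - intros x Hx. apply Dfun_der; lra.
  - intros x Hx. apply dD_bound; lra.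
Qed.

Lemma Dfun_root a : 0 < a < 1 ->
  exists x, 1 < x /\ Dfun a x = ln a /\
    (forall u, 0 < u -> u < x -> ln a < Dfun a u) /\
    (forall u, x < u -> Dfun a u < ln a).
Proof.
  intros Ha.
  pose proof (dpsi_pos 1 ltac:(lra)) as Hd1.
  set (k := (1 - a) * dpsi 1).
  assert (Hk : 0 < k) by (unfold k; apply Rmult_lt_0_compat; lra).
  assert (Hla : ln a < 0) by (rewrite <- ln_1; apply ln_increasing; lra).
  set (U := 1 + (1 - ln a) / k).
  assert (HU : 1 < U) by (unfold U; assert (0 < (1 - ln a) / k) by (apply Rdiv_lt_0_compat; lra); lra).
  assert (HDU : Dfun a U < ln a).
  { pose proof (Dfun_decr a 1 U Ha ltac:(lra)) as M. rewrite Dfun_1 in M.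
    replace ((a - 1) * dpsi 1 * (U - 1)) with (- (1 - ln a)) in M.
    lra. unfold U, k. field. lra. }
  destruct (Ranalysis5.IVT_interv (fun u => ln a - Dfun a u) 1 U) as [x [Hx Hfx]].
  - intros y Hy. apply continuity_pt_minus. apply continuity_pt_const. intros ? ?; reflexivity.
    apply (cont_of_der _ (dD a y)). apply Dfun_der; lra.
  - lra.
  - rewrite Dfun_1. lra.
  - lra.
  - assert (HDx : Dfun a x = ln a) by lra.
    assert (Hx1 : 1 < x).
    { destruct (Rle_lt_or_eq_dec 1 x (proj1 Hx)) as [h|h]; auto.
      subst x. rewrite Dfun_1 in HDx. lra. }
    exists x. split; [auto|split; [auto|split]].
    + intros u Hu0 Hux. destruct (Rle_lt_dec u 1) as [h|h].
      * pose proof (Dfun_small a u Ha ltac:(lra)). lra.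
      * pose proof (Dfun_decr a u x Ha ltac:(lra)). 
        assert (0 < k * (x - u)) by (apply Rmult_lt_0_compat; lra).
        unfold k in *. nra.
    + intros u Hxu. pose proof (Dfun_decr a x u Ha ltac:(lra)).
      assert (0 < k * (u - x)) by (apply Rmult_lt_0_compat; lra).
      unfold k in *. nra.
Qed.

Lemma Dfun_iff_phi a u : 0 < a -> 0 < u -> (Dfun a u = ln a <-> phi (EE a u) = a * phi u)
  /\ (ln a <= Dfun a u <-> a * phi u <= phi (EE a u)).
Proof.
  intros Ha Hu.
  pose proof (phi_pos u Hu). pose proof (phi_pos (EE a u) (exp_pos _)).
  assert (Hl : ln (a * phi u) = ln a + psi u) by (unfold psi; apply ln_mult; auto).
  unfold Dfun. split; split; intros.
  - apply ln_inv; try nra. unfold psi in *. lra.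
  - unfold psi. rewrite H1, ln_mult by auto. ring.
  - apply (ln_le_iff); try nra. unfold psi in *. lra.
  - apply ln_le in H1; [|nra]. unfold psi in *. lra.
Qed.

Lemma fp_iff a x : 0 < a -> 0 < x -> (fp_eq a x <-> Dfun a x = ln a).
Proof.
  intros Ha Hx. rewrite (proj1 (Dfun_iff_phi a x Ha Hx)).
  unfold fp_eq.
  set (E := EE a x).
  assert (HE : 0 < E) by apply exp_pos.
  pose proof (exp_gt x Hx) as Hax.
  assert (HG : a * Rpower x (a - 1) * exp x * (1 - exp (- x)) + 1 = a * E * phi x + 1).
  { unfold Rpower, E, EE, phi. rewrite exp_Ropp.
    replace ((a - 1) * ln x) with (a * ln x + - ln x) by ring.
    rewrite exp_plus, exp_Ropp, exp_ln by lra. field. split; lra. }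
  rewrite HG. set (G := a * E * phi x + 1).
  pose proof (phi_pos x Hx).
  assert (0 < a * E * phi x) by (apply Rmult_lt_0_compat; [apply Rmult_lt_0_compat|]; lra).
  assert (HG1 : 1 < G) by (unfold G; lra).
  assert (HlG : 0 < ln G) by (rewrite <- ln_1; apply ln_increasing; lra).
  assert (HEphi : exp E = E * phi E + 1) by (unfold phi; field; lra).
  transitivity (exp E = G).
  - unfold Rpower. split; intros H1.
    + assert (ln x = / a * ln (ln G)) by (rewrite H1 at 1; apply ln_exp).
      assert (a * ln x = ln (ln G)) by (rewrite H2; field; lra).
      unfold E, EE. rewrite H3, exp_ln by lra. rewrite exp_ln; lra.
    + assert (ln G = E) by (rewrite <- H1; apply ln_exp).
      rewrite H2. unfold E, EE. rewrite ln_exp.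
      replace (/ a * (a * ln x)) with (ln x) by (field; lra). rewrite exp_ln; lra.
  - rewrite HEphi. unfold G. split; intros H1.
    + apply (Rmult_eq_reg_l E); [|lra]. lra.
    + rewrite H1. ring.
Qed.

Lemma cond_iff a p : 0 < a -> 0 < p < 1 ->
  (Derive (prelecTt a) p <= prelecTt a p / p <-> ln a <= Dfun a (uu p)).
Proof.
  intros Ha Hp. rewrite (proj2 (Dfun_iff_phi a (uu p) Ha (uu_pos p Hp))).
  rewrite Dprelec, Tt_eq by auto.
  pose proof (uu_pos p Hp) as Hu. pose proof (exp_uu p Hp) as Hq.
  set (u := uu p) in *. set (E := EE a u).
  assert (HE : 0 < E) by apply exp_pos.
  pose proof (exp_gt u Hu). pose proof (exp_gt E HE).
  set (A := exp u) in *. set (B := exp E) in *.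
  rewrite exp_Ropp in Hq |- *. fold B. fold A in Hq.
  assert (HA : 0 < A) by lra. assert (HB : 0 < B) by lra.
  assert (Hp1 : p = 1 - / A) by lra. rewrite Hp1.
  set (K := E * A / (B * (A - 1))).
  assert (HK : 0 < K) by (unfold K; apply Rdiv_lt_0_compat; nra).
  assert (Pu : phi u = (A - 1) / u) by reflexivity.
  assert (PE : phi E = (B - 1) / E) by reflexivity.
  rewrite Pu, PE. unfold K. clearbody A B E u.
  replace (/ B * E * a / (u * (1 - (1 - / A)))) with (E * A / (B * (A - 1)) * (a * ((A - 1) / u)))
    by (field; repeat split; lra).
  replace ((1 - / B) / (1 - / A)) with (E * A / (B * (A - 1)) * ((B - 1) / E))
    by (field; repeat split; lra).
  fold K.
  apply mul_pos_le_iff; auto.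
Qed.

Theorem corollary4p3 (alpha : R) (Hpos : 0 < alpha) (Hne : alpha <> 1) :
  (1 < alpha ->
     Glb_Rbar (fun p => 0 < p < 1 /\
                 Derive (prelecTt alpha) p >= (1 - prelecTt alpha p) / (1 - p))
     = Finite (1 - exp (- Rpower alpha (- / (alpha - 1)))))
  /\
  (alpha < 1 ->
     exists x : R, 0 < x /\ fp_eq alpha x /\
       (forall y : R, 0 < y -> fp_eq alpha y -> y = x) /\
       Lub_Rbar (fun p => 0 < p < 1 /\
                   Derive (prelecTt alpha) p <= prelecTt alpha p / p)
       = Finite (1 - exp (- x))).
Proof.
  split.
  - intros Ha. apply is_glb_Rbar_unique.
    set (c := Rpower alpha (- / (alpha - 1))).
    assert (Hc : 0 < c) by apply exp_pos.
    assert (Hec : exp (- c) < 1) by (rewrite <- exp_0; apply exp_increasing; lra).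
    pose proof (exp_pos (- c)).
    assert (Hb : 0 < 1 - exp (- c) < 1 /\
       Derive (prelecTt alpha) (1 - exp (- c)) >= (1 - prelecTt alpha (1 - exp (- c))) / (1 - (1 - exp (- c)))).
    { split; [lra|]. apply part1_cond; [auto|lra|]. unfold c. lra. }
    split.
    + intros q [Hq Hcond]. simpl. apply part1_cond in Hcond; auto.
    + intros l Hl. apply Hl. exact Hb.
  - intros Ha.
    destruct (Dfun_root alpha ltac:(lra)) as [x [Hx1 [HDx [Hlt Hgt]]]].
    assert (Hcmp : forall u, 0 < u -> (ln alpha <= Dfun alpha u <-> u <= x)).
    { intros u Hu. split; intros H.
      - destruct (Rle_lt_dec u x) as [h|h]; auto. specialize (Hgt u h). lra.
      - destruct (Rle_lt_or_eq_dec u x H) as [h|h].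
        + left. apply Hlt; auto.
        + subst. lra. }
    exists x. split; [lra|]. split; [apply fp_iff; auto; lra|]. split.
    + intros y Hy Hfp. apply fp_iff in Hfp; auto.
      destruct (Rtotal_order y x) as [h|[h|h]]; auto.
      * specialize (Hlt y Hy h). lra.
      * specialize (Hgt y h). lra.
    + apply is_lub_Rbar_unique.
      assert (Hpb : forall p, 0 < p < 1 -> (uu p <= x <-> p <= 1 - exp (- x))).
      { intros p Hp. unfold uu. split; intros H.
        - assert (- x <= ln (1 - p)) by lra.
          apply (proj1 (exp_le_iff _ _)) in H0. rewrite exp_ln in H0 by lra. lra.
        - assert (exp (- x) <= 1 - p) by lra.
          apply ln_le in H0; [|apply exp_pos]. rewrite ln_exp in H0. lra. }
      assert (Hex : exp (- x) < 1) by (rewrite <- exp_0; apply exp_increasing; lra).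
      pose proof (exp_pos (- x)).
      assert (Hb : 0 < 1 - exp (- x) < 1 /\
         Derive (prelecTt alpha) (1 - exp (- x)) <= prelecTt alpha (1 - exp (- x)) / (1 - exp (- x))).
      { split; [lra|]. apply cond_iff; [lra|lra|].
        apply Hcmp. apply uu_pos; lra. apply Hpb; lra. }
      split.
      * intros q [Hq Hcond]. simpl. apply cond_iff in Hcond; [|lra|auto].
        apply Hcmp in Hcond; [|apply uu_pos; auto]. apply Hpb; auto.
      * intros l Hl. apply Hl. exact Hb.
Qed.
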